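(* Let $\mathcal A\subseteq\mathrm{Mat}(\mathbb{Z}^D,p)$ be an invertible subalgebra with spread $\ell$, and let $\mathcal B$ be its commutant within $\mathrm{Mat}(\mathbb{Z}^D,p)$. Then both $\mathcal A$ and $\mathcal B$ are VS.
   Context: For $p:\mathbb{Z}^D\to\mathbb{Z}_{>0}$ and finite $S$, $\mathrm{Mat}(S,p)=\bigotimes_{s\in S}M_{p(s)}(\mathbb{C})$ with embeddings by tensoring identities; $\mathrm{Mat}(\mathbb{Z}^D,p)$ is the union. $\mathrm{Supp}(x)$ is the smallest finite $S$ with $x\in\mathrm{Mat}(S,p)$; $S^{+\ell}$ is the set of sites at $\ell_\infty$-distance at most $\ell$ from $S$. A unital $*$-subalgebra $\mathcal A$ is invertible with spread $\ell>0$ if every $x\in\mathrm{Mat}(\mathbb{Z}^D,p)$ is a finite sum $x=\sum_ia_ib_i$ with $a_i\in\mathcal A$, $b_i$ in the commutant of $\mathcal A$ within $\mathrm{Mat}(\mathbb{Z}^D,p)$, and $\mathrm{Supp}(a_i),\mathrm{Supp}(b_i)\subseteq\mathrm{Supp}(x)^{+\ell}$. A $*$-subalgebra $\mathcal C$ is VS if there is $\ell'>0$ such that for every $c\in\mathcal C\setminus\mathbb{C}\mathbf 1$ and every $s\in\mathrm{Supp}(c)$ there is $w\in\mathcal C\cap\mathrm{Mat}(\{s\}^{+\ell'},p)$ with $[c,w]\neq0$. *)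

(* Defs.v *)
From HB Require Import structures.
From mathcomp Require Import all_boot all_order all_algebra finmap.
From mathcomp Require Import boolp classical_sets fsbigop reals.
From mathcomp Require Import complex.

Set Implicit Arguments.
Unset Strict Implicit.
Unset Printing Implicit Defensive.

Import Order.TTheory GRing.Theory Num.Theory.
Local Open Scope classical_set_scope.
Local Open Scope ring_scope.

Definition site (D : nat) := {ffun 'I_D -> int}.

Definition linf_dist (D : nat) (x y : site D) : nat :=
  \max_(i < D) `|x i - y i|%N.

Definition thicken (D : nat) (l : nat) (S : set (site D)) : set (site D) :=
  [set x | exists2 y, S y & (linf_dist x y <= l)%N].

(* Mat(Z^D,p) is realized (faithfully) as the algebra of
   local operators acting on the free vector space spanned by the finitely
   supported configurations sigma : Z^D -> N with sigma s < p s (reference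
   state 0 at every site); i.e. |sigma> = (x)_s |sigma s>.  An operator is
   given by its matrix entries  x sigma tau = <sigma| x |tau>.               *)
Definition conf (D : nat) (p : site D -> nat) :=
  {sigma : {fsfun site D -> nat with 0%N} |
     all (fun s => (sigma s < p s)%N) (finsupp sigma)}.

Definition Op (R : rcfType) (D : nat) (p : site D -> nat) :=
  conf p -> conf p -> R[i].

Section Ops.
Variables (R : rcfType) (D : nat) (p : site D -> nat).
Local Notation C := R[i].
Local Notation Op := (@Op R D p).

Definition op_one : Op := fun s t => (s == t)%:R.
Definition op_add (x y : Op) : Op := fun s t => x s t + y s t.
Definition op_scale (a : C) (x : Op) : Op := fun s t => a * x s t.
(* matrix product; for local operators the sum has finite support *)
Definition op_mul (x y : Op) : Op :=
  fun s t => \sum_(r \in [set: conf p]) x s r * y r t.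
Definition op_adj (x : Op) : Op := fun s t => (x t s)^*.
Definition op_comm (x y : Op) : Op :=
  fun s t => op_mul x y s t - op_mul y x s t.

(* x belongs to Mat(S,p) = (x)_{s in S} M_{p(s)}(C) (tensored with identities
   outside S): x is diagonal-identity off S and its entries only depend on the
   restrictions of the configurations to S. *)
Definition local_on (S : set (site D)) (x : Op) : Prop :=
  (forall s t : conf p, (exists2 k, ~ S k & val s k <> val t k) -> x s t = 0)
  /\ (forall s t s' t' : conf p,
        (forall k, S k -> val s k = val s' k /\ val t k = val t' k) ->
        (forall k, ~ S k -> val s k = val t k) ->
        (forall k, ~ S k -> val s' k = val t' k) ->
        x s t = x s' t').

Definition in_Mat (x : Op) : Prop := exists S : {fset site D}, local_on [set k | k \in S] x.

Definition Supp (x : Op) : set (site D) :=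
  [set k | forall S : {fset site D}, local_on [set j | j \in S] x -> k \in S].

Definition unital_star_subalgebra (A : set Op) : Prop :=
  [/\ A `<=` in_Mat, A op_one,
      (forall x y, A x -> A y -> A (op_add x y)) /\
      (forall a x, A x -> A (op_scale a x)),
      (forall x y, A x -> A y -> A (op_mul x y)) &
      (forall x, A x -> A (op_adj x))].

Definition commutant (A : set Op) : set Op :=
  [set b | in_Mat b /\ forall a, A a -> op_mul a b = op_mul b a].

Definition invertible_with_spread (A : set Op) (l : nat) : Prop :=
  unital_star_subalgebra A /\ (0 < l)%N /\
  forall x, in_Mat x ->
    exists (n : nat) (a b : 'I_n -> Op),
      x = (fun s t => \sum_(i < n) op_mul (a i) (b i) s t) /\
      forall i, [/\ A (a i), commutant A (b i),
                    Supp (a i) `<=` thicken l (Supp x) &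
                    Supp (b i) `<=` thicken l (Supp x)].

Definition VS (Cc : set Op) : Prop :=
  exists l' : nat, (0 < l')%N /\
    forall c, Cc c -> ~ (exists z : C, c = op_scale z op_one) ->
      forall s, Supp c s ->
        exists w, [/\ Cc w, local_on (thicken l' [set s]) w & op_comm c w <> (fun _ _ => 0)].

End Ops.

(* Main.v *)
Require Import Defs.
From HB Require Import structures.
From mathcomp Require Import all_boot all_order all_algebra finmap.
From mathcomp Require Import boolp classical_sets fsbigop reals cardinality.
From mathcomp Require Import complex.

Set Implicit Arguments.
Unset Strict Implicit.
Unset Printing Implicit Defensive.
Import Order.TTheory GRing.Theory Num.Theory.
Local Open Scope classical_set_scope.
Local Open Scope ring_scope.

Section Aux.
Variables (R : rcfType) (D : nat) (p : site D -> nat).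
Hypothesis p_pos : forall s, (0 < p s)%N.
Local Notation C := R[i].
Local Notation cf := (conf p).
Local Notation Op := (@Op R D p).

Lemma conf_lt (s : cf) k : (val s k < p k)%N.
Proof.
case: s => f /= /allP H.
case: (finsuppP f k) => [_|kf]; first exact: p_pos.
exact: H.
Qed.

Lemma conf_ext (s t : cf) : (forall k, val s k = val t k) -> s = t.
Proof. by move=> H; apply: val_inj; apply/fsfunP. Qed.

Definition mkf (F : {fset site D}) (f : site D -> nat) :
  {fsfun site D -> nat with 0%N} :=
  [fsfun k in F => (if (f k < p k)%N then f k else 0%N) | 0%N].

Lemma mkf_ok F f : all (fun s => (mkf F f s < p s)%N) (finsupp (mkf F f)).
Proof.
apply/allP => k _; rewrite /mkf fsfun_fun.
case: ifP => _; last exact: p_pos.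
by case: ifP => // _; exact: p_pos.
Qed.

Definition mk F f : cf := exist _ (mkf F f) (mkf_ok F f).

Lemma mkE F f k : val (mk F f) k =
  if k \in F then (if (f k < p k)%N then f k else 0%N) else 0%N.
Proof. by rewrite /= /mkf fsfun_fun. Qed.

Definition mix (F : {fset site D}) (s1 s2 : cf) : cf :=
  mk (F `|` finsupp (val s2))%fset (fun k => if k \in F then val s1 k else val s2 k).

Lemma mixE F s1 s2 k : val (mix F s1 s2) k = if k \in F then val s1 k else val s2 k.
Proof.
rewrite mkE inE; case: (boolP (k \in F)) => kF /=.
  by rewrite conf_lt.
case: (finsuppP (val s2) k) => // _; by rewrite conf_lt.
Qed.

Definition upd (s : cf) (k : site D) (a : nat) : cf :=
  mk (k |` finsupp (val s))%fset (fun j => if j == k then a else val s j).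

Lemma updE s k a j : (a < p k)%N ->
  val (upd s k a) j = if j == k then a else val s j.
Proof.
move=> ha; rewrite mkE !inE; case: (eqVneq j k) => [->|jk] /=; first by rewrite ha.
case: (finsuppP (val s) j) => // _; by rewrite conf_lt.
Qed.

Lemma upd_id s k : upd s k (val s k) = s.
Proof.
apply: conf_ext => j; rewrite updE ?conf_lt //.
by case: eqVneq => // ->.
Qed.

Lemma upd_upd s k a b : (a < p k)%N -> (b < p k)%N -> upd (upd s k a) k b = upd s k b.
Proof.
move=> ha hb; apply: conf_ext => j; rewrite !updE //.
by case: eqVneq.
Qed.


Lemma local_mono (S T : set (site D)) (x : Op) :
  S `<=` T -> local_on S x -> local_on T x.
Proof.
move=> ST [h1 h2]; split.
  move=> s t [k nTk neq]; apply: h1; exists k => // Sk; exact: nTk (ST _ Sk).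
move=> s t s' t' hT hst hs't'.
have [[k [Tk nSk neq]]|nex] :=
  pselect (exists k, [/\ T k, ~ S k & val s k <> val t k]).
  rewrite h1; last by exists k.
  rewrite h1 //; exists k => //.
  by have [<- <-] := hT k Tk.
have eqst k : T k -> ~ S k -> val s k = val t k.
  move=> Tk nSk; apply: contrapT => neq; apply: nex; by exists k.
apply: h2.
- move=> k Sk; exact: hT (ST _ Sk).
- move=> k nSk; have [Tk|nTk] := pselect (T k); first exact: eqst.
  exact: hst.
- move=> k nSk; have [Tk|nTk] := pselect (T k); last exact: hs't'.
  by have [<- <-] := hT k Tk; exact: eqst.
Qed.

Lemma local_meet (S1 S2 : {fset site D}) (x : Op) :
  local_on [set j | j \in S1] x -> local_on [set j | j \in S2] x ->
  local_on [set j | j \in (S1 `&` S2)%fset] x.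
Proof.
move=> [h1 h2] [g1 g2]; split.
  move=> s t [k /= nk neq].
  have [k1|nk1] := boolP (k \in S1).
    apply: g1; exists k => //= k2; apply: nk; by rewrite inE k1 k2.
  apply: h1; exists k => //=; exact/negP.
move=> s t s' t' hT hst hs't'.
have e1 : x s t = x (mix S1 s s') (mix S1 t t').
  apply: h2.
  - by move=> k /= k1; rewrite !mixE k1.
  - move=> k /= nk1; apply: hst => /=; rewrite inE => /andP[k1 _]; exact: nk1.
  - move=> k /= nk1; rewrite !mixE ifN; last exact/negP.
    rewrite ifN; last exact/negP.
    apply: hs't' => /=; rewrite inE => /andP[k1 _]; exact: nk1.
rewrite e1; apply: g2.
- move=> k /= k2; rewrite !mixE; case: ifP => k1 //.
  have := hT k; rewrite /= inE k1 k2 => /(_ isT) [-> ->]; by [].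
- move=> k /= nk2; rewrite !mixE; case: ifP => k1.
    apply: hst => /=; rewrite inE => /andP[_ k2]; exact: nk2.
  apply: hs't' => /=; rewrite inE => /andP[k1' _]; by rewrite k1' in k1.
- move=> k /= nk2; apply: hs't' => /=; rewrite inE => /andP[_ k2]; exact: nk2.
Qed.

Lemma supp_local (x : Op) (T : set (site D)) :
  in_Mat x -> Supp x `<=` T -> local_on T x.
Proof.
move=> [S0 h0] sT.
have claim : forall ks : seq (site D), (forall k, k \in ks -> ~ Supp x k) ->
  exists S : {fset site D}, [/\ local_on [set j | j \in S] x,
     (S `<=` S0)%fset & forall k, k \in ks -> k \notin S].
  elim => [|k ks IH] hks.
    by exists S0; split.
  have [|S [hS sub nin]] := IH.
    by move=> j jks; apply: hks; rewrite inE jks orbT.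
  have := hks k; rewrite inE eqxx => /(_ isT) nSk.
  have [Sk [hSk kSk]] : exists Sk : {fset site D},
      local_on [set j | j \in Sk] x /\ k \notin Sk.
    apply: contrapT => nex; apply: nSk => Sk hSk; apply: contrapT => kn.
    apply: nex; exists Sk; split => //; exact/negP.
  exists (S `&` Sk)%fset; split.
  - exact: local_meet.
  - apply: fsubset_trans sub; exact: fsubsetIl.
  - move=> j; rewrite inE => /orP[/eqP ->|jks]; rewrite inE negb_and ?kSk ?orbT //.
    by rewrite nin.
have hks : forall k, k \in [seq k <- enum_fset S0 | `[< ~ T k >]] -> ~ Supp x k.
  move=> k; rewrite mem_filter => /andP[/asboolP nTk _] Sk; exact: nTk (sT _ Sk).
have [S [hS sub nin]] := claim _ hks.
apply: local_mono hS => k /= kS; apply: contrapT => nTk.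
have := nin k; rewrite mem_filter (fsubsetP sub k kS) andbT.
by move/(_ (asboolT nTk)); rewrite kS.
Qed.


Definition nbhd (s : cf) (S : {fset site D}) : set cf :=
  [set r : cf | forall k, k \notin S -> val r k = val s k].

Lemma nbhd_finite s S : finite_set (nbhd s S).
Proof.
pose N := (\max_(k : S) p (val k)).+1.
pose g (f : {ffun S -> 'I_N}) : cf := mk (S `|` finsupp (val s))%fset
  (fun k => match (insub k : option S) with Some k' => nat_of_ord (f k') | None => val s k end).
apply: (sub_finite_set (B := g @` setT)); last exact/finite_image/finite_finset.
move=> r hr; exists [ffun k => inord (val r (val k))] => //.
apply: conf_ext => k; rewrite mkE inE.
case: insubP => [k' kS ek|nkS].
  rewrite kS /= ffunE -ek inordK ?conf_lt //.
  rewrite ltnS; apply: leq_trans (ltnW (conf_lt r (val k'))) _.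
  exact: (@leq_bigmax _ (fun j : S => p (val j))).
rewrite (negbTE nkS) /= hr //.
case: (finsuppP (val s) k) => // _; by rewrite conf_lt.
Qed.

Lemma row_supp S (x : Op) s r : local_on [set j | j \in S] x ->
  ~ nbhd s S r -> x s r = 0.
Proof.
move=> [h1 _] nr; apply: h1.
apply: contrapT => nex; apply: nr => k kS; apply: contrapT => neq.
apply: nex; exists k => //=; first exact/negP.
by move=> e; apply: neq.
Qed.

Lemma col_supp S (x : Op) t r : local_on [set j | j \in S] x ->
  ~ nbhd t S r -> x r t = 0.
Proof.
move=> [h1 _] nr; apply: h1.
apply: contrapT => nex; apply: nr => k kS; apply: contrapT => neq.
apply: nex; exists k => //=; exact/negP.
Qed.

Lemma mulE_row S (x y : Op) s t : local_on [set j | j \in S] x ->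
  op_mul x y s t = \sum_(r <- fset_set (nbhd s S)) x s r * y r t.
Proof.
move=> hx; rewrite /op_mul -(fsbig_widen (nbhd s S) setT) //.
  by rewrite fsbig_finite //; exact: nbhd_finite.
by move=> r [_ nr] /=; rewrite (row_supp hx nr) mul0r.
Qed.

Lemma mulE_col S (x y : Op) s t : local_on [set j | j \in S] y ->
  op_mul x y s t = \sum_(r <- fset_set (nbhd t S)) x s r * y r t.
Proof.
move=> hy; rewrite /op_mul -(fsbig_widen (nbhd t S) setT) //.
  by rewrite fsbig_finite //; exact: nbhd_finite.
by move=> r [_ nr] /=; rewrite (col_supp hy nr) mulr0.
Qed.

Lemma op_mulA (x y z : Op) : in_Mat x -> in_Mat z ->
  op_mul (op_mul x y) z = op_mul x (op_mul y z).
Proof.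
move=> [Sx hx] [Sz hz]; apply/funext => s; apply/funext => t.
rewrite (mulE_col _ _ _ hz) (mulE_row _ _ _ hx).
transitivity (\sum_(r <- fset_set (nbhd t Sz)) \sum_(q <- fset_set (nbhd s Sx))
   x s q * y q r * z r t).
  apply: eq_bigr => r _; rewrite (mulE_row _ _ _ hx) mulr_suml; done.
transitivity (\sum_(q <- fset_set (nbhd s Sx)) \sum_(r <- fset_set (nbhd t Sz))
   x s q * y q r * z r t).
  exact: exchange_big.
apply: eq_bigr => q _; rewrite (mulE_col _ _ _ hz) mulr_sumr.
by apply: eq_bigr => r _; rewrite mulrA.
Qed.

Lemma mul_sumr (x : Op) n (y : 'I_n -> Op) : in_Mat x ->
  op_mul x (fun s t => \sum_(i < n) y i s t) =
  (fun s t => \sum_(i < n) op_mul x (y i) s t).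
Proof.
move=> [Sx hx]; apply/funext => s; apply/funext => t.
rewrite (mulE_row _ _ _ hx).
under eq_bigr do rewrite mulr_sumr.
rewrite exchange_big /=; apply: eq_bigr => i _.
by rewrite (mulE_row _ _ _ hx).
Qed.

Lemma mul_suml (z : Op) n (y : 'I_n -> Op) : in_Mat z ->
  op_mul (fun s t => \sum_(i < n) y i s t) z =
  (fun s t => \sum_(i < n) op_mul (y i) z s t).
Proof.
move=> [Sz hz]; apply/funext => s; apply/funext => t.
rewrite (mulE_col _ _ _ hz).
under eq_bigr do rewrite mulr_suml.
rewrite exchange_big /=; apply: eq_bigr => i _.
by rewrite (mulE_col _ _ _ hz).
Qed.

Lemma comm_decomp (c : Op) n (a b : 'I_n -> Op) :
  in_Mat c -> (forall i, in_Mat (a i)) -> (forall i, in_Mat (b i)) ->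
  (forall i, op_mul c (a i) = op_mul (a i) c) ->
  (forall i, op_mul c (b i) = op_mul (b i) c) ->
  let x := (fun s t => \sum_(i < n) op_mul (a i) (b i) s t) in
  op_mul c x = op_mul x c.
Proof.
move=> hc ha hb ca cb x; rewrite /x mul_sumr // mul_suml //.
apply/funext => s; apply/funext => t; apply: eq_bigr => i _.
rewrite -op_mulA // ca op_mulA // cb -op_mulA //.
Qed.


Definition Eu (s : site D) (a b : nat) : Op :=
  fun u v => ((val v s == b) && (u == upd v s a))%:R.

Lemma upd_eq (u v : cf) s a : (a < p s)%N ->
  (forall k, k != s -> val u k = val v k) -> (u == upd v s a) = (val u s == a).
Proof.
move=> ha huv; apply/eqP/eqP => [->|us]; first by rewrite updE // eqxx.
apply: conf_ext => k; rewrite updE //; case: eqVneq => [->//|ks]; exact: huv.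
Qed.

Lemma Eu_local s a b : (a < p s)%N -> local_on [set j | j \in [fset s]%fset] (Eu s a b).
Proof.
move=> ha; split.
  move=> u v [k /= nk neq]; rewrite /Eu.
  have ks : k != s by apply/negP => /eqP ek; apply: nk; rewrite ek inE.
  case: (eqVneq u (upd v s a)) => [eu|]; last by rewrite andbF.
  by exfalso; apply: neq; rewrite eu updE // (negbTE ks).
move=> u v u' v' hT huv hu'v'.
have [eu ev] := hT s (fset11 s).
rewrite /Eu ev (@upd_eq u v) ?(@upd_eq u' v') ?eu //.
  move=> k ks; apply: hu'v' => /=; rewrite inE; exact/negP.
move=> k ks; apply: huv => /=; rewrite inE; exact/negP.
Qed.

Lemma mul_cE (c : Op) s a b u v : (a < p s)%N ->
  op_mul c (Eu s a b) u v = if val v s == b then c u (upd v s a) else 0.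
Proof.
move=> ha; rewrite /op_mul -(fsbig_widen [set upd v s a] setT) //.
  rewrite fsbig_set1 /Eu eqxx andbT; by case: ifP; rewrite ?mulr1 ?mulr0.
move=> r [_ /= nr]; rewrite /Eu.
case: (eqVneq r (upd v s a)) => [er|]; last by rewrite andbF mulr0.
by exfalso; apply: nr; rewrite er.
Qed.

Lemma mul_Ec (c : Op) s a b u v : (a < p s)%N -> (b < p s)%N ->
  op_mul (Eu s a b) c u v = if val u s == a then c (upd u s b) v else 0.
Proof.
move=> ha hb; rewrite /op_mul -(fsbig_widen [set upd u s b] setT) //.
  rewrite fsbig_set1 /Eu updE // !eqxx /= upd_upd //.
  rewrite (@upd_eq u u s a ha (fun _ _ => erefl)).
  by case: ifP; rewrite ?mul1r ?mul0r.
move=> r [_ /= nr]; rewrite /Eu.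
case: (eqVneq (val r s) b) => [rb|]; last by rewrite mul0r.
case: (eqVneq u (upd r s a)) => [eu|]; last by rewrite mul0r.
exfalso; apply: nr; rewrite eu upd_upd // -rb upd_id //.
Qed.

Lemma key (c : Op) s : in_Mat c ->
  (forall a b, (a < p s)%N -> (b < p s)%N ->
     op_mul c (Eu s a b) = op_mul (Eu s a b) c) -> ~ Supp c s.
Proof.
move=> [S0 [h1 h2]] hcomm hsupp.
suff hS : local_on [set j | j \in (S0 `\ s)%fset] c.
  by have := hsupp _ hS; rewrite !inE eqxx.
split.
  move=> u v [k /= nk neq].
  have [kS0|nkS0] := boolP (k \in S0); last first.
    apply: h1; exists k => //=; exact/negP.
  have ek : k = s.
    apply/eqP; apply: contrapT => ks; apply: nk; rewrite !inE kS0 andbT; exact/negP.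
  have := congr1 (fun f => f u v) (hcomm _ _ (conf_lt v s) (conf_lt v s)).
  rewrite mul_cE ?conf_lt // mul_Ec ?conf_lt // eqxx upd_id.
  by rewrite ifN //; apply/eqP; rewrite -ek.
move=> u v u' v' hT huv hu'v'.
have nsS : ~ (s \in (S0 `\ s)%fset) by rewrite !inE eqxx.
have euv : val u s = val v s by apply: huv.
set be := val u' s.
have hbe : (be < p s)%N by exact: conf_lt.
have := congr1 (fun f => f (upd u s be) v) (hcomm be (val v s) hbe (conf_lt v s)).
rewrite mul_cE // mul_Ec ?conf_lt // updE // upd_upd ?conf_lt //.
rewrite -euv upd_id !eqxx => <-.
apply: h2.
- move=> k /= kS0; rewrite !updE //; case: eqVneq => [->|ks].
    split => //; exact: hu'v'.
  apply: hT => /=; rewrite !inE kS0 andbT; exact: ks.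
- move=> k /= nkS0; rewrite !updE //; case: eqVneq => [//|ks].
  apply: huv => /=; rewrite !inE => /andP[_ kS]; by rewrite kS in nkS0.
- move=> k /= nkS0; apply: hu'v' => /=; rewrite !inE => /andP[_ kS]; by rewrite kS in nkS0.
Qed.


Lemma comm0 (c w : Op) : op_comm c w = (fun _ _ => 0) -> op_mul c w = op_mul w c.
Proof.
move=> h; apply/funext => u; apply/funext => v; apply/eqP; rewrite -subr_eq0; apply/eqP.
exact: (congr1 (fun f => f u v) h).
Qed.

Lemma thicken_mono l (X Y : set (site D)) : X `<=` Y -> thicken l X `<=` thicken l Y.
Proof. by move=> XY x [y Xy d]; exists y => //; exact: XY. Qed.

Lemma main (A : set Op) l : invertible_with_spread A l -> VS A /\ VS (commutant A).
Proof.
move=> [[AM A1 _ _ _] [l0 dec]].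
have core : forall (c : Op) s, in_Mat c -> Supp c s ->
  (forall w, A w -> local_on (thicken l [set s]) w -> op_mul c w = op_mul w c) ->
  (forall w, commutant A w -> local_on (thicken l [set s]) w -> op_mul c w = op_mul w c) ->
  False.
  move=> c s hc hs HA HB; apply: (key hc _ hs) => a b ha hb.
  have EM : in_Mat (Eu s a b) by exists [fset s]%fset; exact: Eu_local.
  have [n [x [y [eq hi]]]] := dec _ EM.
  have sE : Supp (Eu s a b) `<=` [set s].
    move=> k hk; have := hk _ (Eu_local b ha); rewrite inE => /eqP ->; done.
  have hT : thicken l (Supp (Eu s a b)) `<=` thicken l [set s] by exact: thicken_mono.
  rewrite eq; apply: comm_decomp => // i; have [Ax By Sx Sy] := hi i.
  - exact: AM.
  - by case: By.
  - apply: HA => //; apply: supp_local; [exact: AM | exact: subset_trans hT].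
  - apply: HB => //; apply: supp_local; [by case: By | exact: subset_trans hT].
split; exists l; split => //.
  move=> c Ac _ s hs; apply: contrapT => nex.
  apply: (core c s (AM _ Ac) hs).
    move=> w Aw lw; apply: contrapT => ne; apply: nex; exists w; split => //.
    by move=> h; apply: ne; apply: comm0.
  by move=> w [_ hw] _; apply: hw.
move=> c [cM cA] _ s hs; apply: contrapT => nex.
apply: (core c s cM hs).
  by move=> w Aw _; rewrite cA.
move=> w Bw lw; apply: contrapT => ne; apply: nex; exists w; split => //.
by move=> h; apply: ne; apply: comm0.
Qed.

End Aux.

Theorem lemma2p2 (R : realType) (D : nat) (p : site D -> nat)
  (p_pos : forall s, (0 < p s)%N)
  (A : set (@Op R D p)) (l : nat) :
  invertible_with_spread A l ->
  VS A /\ VS (commutant A).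
Proof. exact: main. Qed.
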